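(* Let $X$ be a reflexive complex Banach space, let $A$ be a positive self-adjoint operator from $X$ to $X^\ast$, and let $E$ be a bounded linear operator on $X$ such that $E(\operatorname{dom}A)\subseteq\operatorname{dom}A$ and $E^\ast A\subseteq AE$. Then the assignment $\hat E(Ax):=AEx$ ($x\in\operatorname{dom}A$) gives a well-defined linear operator $\hat E$ on $\operatorname{ran}A$, and $\hat E$ is bounded with respect to the norm of $H_A$.
   Context: $X^\ast$ denotes the conjugate dual of $X$ (continuous conjugate-linear functionals on $X$); $X$ is identified with $X^{\ast\ast}$. For $v\in X^\ast$, $x\in X$ write $(v,x):=v(x)$ and $(x,v):=\overline{v(x)}$. An operator $A$ from $X$ to $X^\ast$ is positive if $(Ax,x)\ge0$ for all $x\in\operatorname{dom}A$; its adjoint $A^\ast$ has domain $\{y\in X:x\mapsto(Ax,y)\text{ continuous on }\operatorname{dom}A\}$ and is determined by $(x,A^\ast y)=(Ax,y)$; $A$ is self-adjoint if $A=A^\ast$. For a bounded operator $E$ on $X$, $E^\ast$ is the bounded operator on $X^\ast$ with $(E^\ast v,x)=(v,Ex)$. $H_A$ is the completion of $\operatorname{ran}A$ with respect to the inner product $[Ax,Ay]_A:=(Ax,y)$ (well defined and positive definite on $\operatorname{ran}A$). *)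

(* Defs.v *)
From HB Require Import structures.
From mathcomp Require Import all_boot all_order all_algebra.
From mathcomp Require Import all_classical all_reals topology normedtype.
From mathcomp.real_closed Require Import complex.
Set Implicit Arguments. Unset Strict Implicit. Unset Printing Implicit Defensive.
Import Order.TTheory GRing.Theory Num.Theory.
Import numFieldNormedType.Exports.
Local Open Scope classical_set_scope.
Local Open Scope ring_scope.

Definition Cx (R : realType) : numClosedFieldType := R[i].

Section Defs.
Variable R : realType.
Local Notation C := (Cx R).
Variable X : normedModType C.

Definition conj_linear (v : X -> C) : Prop :=
  (forall x y : X, v (x + y) = v x + v y) /\
  (forall (a : C) (x : X), v (a *: x) = a^* * v x).

Definition in_cdual (v : X -> C) : Prop := conj_linear v /\ continuous v.

Definition bounded_op (E : X -> X) : Prop :=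
  (forall (a : C) (x y : X), E (a *: x + y) = a *: E x + E y) /\ continuous E.

Definition cadj_op (E : X -> X) (v : X -> C) : X -> C := fun x => v (E x).

(* reflexivity: every continuous conjugate-linear functional on X^* (continuity
   w.r.t. the dual norm, expressed as boundedness |phi v| <= c ||v||, where
   ||v|| = inf {M >= 0 | forall x, |v x| <= M |x|}) is of the form
   v |-> (x, v) = conj (v x) for some x in X. *)
Definition reflexive_space : Prop :=
  forall phi : (X -> C) -> C,
    (forall u v, in_cdual u -> in_cdual v -> phi (fun z => u z + v z) = phi u + phi v) ->
    (forall a v, in_cdual v -> phi (fun z => a * v z) = a^* * phi v) ->
    (exists c : R, forall v, in_cdual v -> forall M : R, 0 <= M ->
        (forall x, `|v x| <= (M%:C)%C * `|x|) -> `|phi v| <= ((c * M)%:C)%C) ->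
    exists x : X, forall v, in_cdual v -> phi v = (v x)^*.

Definition op_to_dual (domA : set X) (A : X -> X -> C) : Prop :=
  domA 0 /\
  (forall (a : C) x y, domA x -> domA y -> domA (a *: x + y)) /\
  (forall x, domA x -> in_cdual (A x)) /\
  (forall (a : C) x y, domA x -> domA y ->
     A (a *: x + y) = (fun z => a * A x z + A y z)).

Definition positive_op (domA : set X) (A : X -> X -> C) : Prop :=
  forall x, domA x -> 0 <= A x x.

Definition adj_dom (domA : set X) (A : X -> X -> C) : set X :=
  [set y | {within domA, continuous (fun x => A x y)}].

(* self-adjointness A = A^*: dom A is dense (so that A^* is determined),
   dom A^* = dom A, and (x, A y) = (A x, y) for x, y in dom A. *)
Definition selfadjoint_op (domA : set X) (A : X -> X -> C) : Prop :=
  closure domA = setT /\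
  adj_dom domA A = domA /\
  (forall x y, domA x -> domA y -> (A y x)^* = A x y).

Definition ranA (domA : set X) (A : X -> X -> C) : set (X -> C) :=
  [set u | exists2 x, domA x & A x = u].

End Defs.

(* Main.v *)
Require Import Defs.
From HB Require Import structures.
From mathcomp Require Import all_boot all_order all_algebra.
From mathcomp Require Import all_classical all_reals topology normedtype.
From mathcomp.real_closed Require Import complex.
From mathcomp Require Import ring lra.
Import Order.TTheory GRing.Theory Num.Theory.
Import numFieldNormedType.Exports.
Local Open Scope classical_set_scope.
Local Open Scope ring_scope.
Lemma discr (R : realType) (p q s : R) : 0 <= p -> 0 <= q ->
  (forall t : R, 0 <= p - 2 * t * s + t ^+ 2 * q) -> s ^+ 2 <= p * q.
Proof.
move=> p0 q0 H.
have [q0'|qgt] := eqVneq q 0.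
  have [s0|sn] := eqVneq s 0; first by rewrite s0 q0' expr0n /= mulr0.
  have := H ((p + 1) / (2 * s)); rewrite q0' mulr0 addr0.
  have -> : 2 * ((p + 1) / (2 * s)) * s = p + 1.
    by field.
  by lra.
have qp : 0 < q by rewrite lt0r qgt.
have := H (s / q).
have -> : p - 2 * (s / q) * s + (s / q) ^+ 2 * q = (p * q - s ^+ 2) / q by field.
by rewrite pmulr_lge0 ?invr_gt0 // subr_ge0.
Qed.

Lemma bern (R : realType) (d : R) (k : nat) : 1 <= d -> 1 + k%:R * (d - 1) <= d ^+ k.
Proof.
move=> d1; elim: k => [|k IH]; first by rewrite mul0r addr0 expr0.
rewrite exprS -natr1.
have h : 0 <= d - 1 by lra.
have h2 : 0 <= k%:R * (d - 1) by apply: mulr_ge0.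
nra.
Qed.

Lemma core (R : realType) (a : nat -> R) (c B : R) : 0 < c ->
  (forall k, 0 <= a k) -> (forall k, a k.+1 ^+ 2 <= a k * a k.+2) ->
  (forall k, a k <= B * c ^+ k) -> a 1%N <= c * a 0%N.
Proof.
move=> c0 ge0 lc bd; rewrite leNgt; apply/negP => H.
have a0p : 0 < a 0%N.
  rewrite lt0r ge0 andbT; apply/eqP => a00.
  have := lc 0%N; rewrite a00 mul0r => h.
  have : a 1%N = 0 by apply/eqP; rewrite -sqrf_eq0 eq_le h sqr_ge0.
  by move=> a10; move: H; rewrite a10 a00 mulr0 ltxx.
set r := a 1%N / a 0%N.
have rc : c < r by rewrite /r ltr_pdivlMr.
have rp : 0 < r by apply: lt_trans rc.
have step : forall k, 0 < a k /\ r * a k <= a k.+1.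
  elim=> [|k [akp IH]].
    by split => //; rewrite /r mulrVK // unitfE gt_eqF.
  have ak1 : 0 < a k.+1 by apply: lt_le_trans IH; rewrite mulr_gt0.
  split => //.
  have := lc k => h.
  have h2 : a k.+1 * (r * a k) <= a k.+1 ^+ 2 by rewrite expr2; nra.
  have h3 : a k * (r * a k.+1) <= a k * a k.+2 by nra.
  by rewrite -(ler_pM2l akp).
have geo : forall k, a 0%N * r ^+ k <= a k.
  elim=> [|k IH]; first by rewrite expr0 mulr1.
  have [_ h] := step k.
  rewrite exprSr; move: IH h; set t := r ^+ k; nra.
set d := r / c.
have d1 : 1 < d by rewrite /d ltr_pdivlMr // mul1r.
have key : forall k : nat, a 0%N * d ^+ k <= B.
  move=> k; have := le_trans (geo k) (bd k).
  by move=> h; rewrite /d expr_div_n mulrA ler_pdivrMr ?exprn_gt0.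
set T := B / (a 0%N * (d - 1)).
have Tn : 0 <= `|T| by [].
have := archi_boundP Tn; set n := Num.Def.archi_bound _ => hk.
have := key n; have := @bern R d n (ltW d1).
have hT : T <= `|T| by apply: ler_norm.
have dp : 0 < d - 1 by lra.
have e1 : n%:R * (d - 1) > T * (d - 1) by rewrite ltr_pM2r //; lra.
have e2 : T * (d - 1) * a 0%N = B.
  by rewrite /T; field; rewrite gt_eqF // gt_eqF.
nra.
Qed.
Lemma bound_hom (R : realType) (X Y : normedModType (Cx R)) (f : X -> Y) :
  f 0 = 0 -> {for 0, continuous f} ->
  (forall a z, `|f (a *: z)| = `|a| * `|f z|) ->
  exists M : R, 0 < M /\ forall z, `|f z| <= ((M%:C)%C : Cx R) * `|z|.
Proof.
move=> f0 cf hom.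
have := cf; rewrite /prop_for /continuous_at f0 => /cvgrPdist_lt /(_ 1 ltr01).
move=> /nbhs_norm0P [e /= e0 He].
have er : (2 / e : Cx R) \is Num.real by apply: gtr0_real; rewrite divr_gt0.
exists (complex.Re (2 / e : Cx R)); split.
  by rewrite -ltcR RRe_real // divr_gt0.
rewrite RRe_real // => z.
have [->|zn] := eqVneq z 0; first by rewrite f0 !normr0 mulr0.
have nz : 0 < `|z| by rewrite normr_gt0.
set a : Cx R := e / (2 * `|z|).
have ap : 0 < a by rewrite divr_gt0 // mulr_gt0.
have : `|a *: z| < e.
  rewrite normrZ gtr0_norm //.
  have -> : a * `|z| = e / 2 by rewrite /a; field; rewrite gt_eqF.
  by rewrite ltr_pdivrMr // ltr_pMr // ltr1n.
move=> /He /=; rewrite sub0r normrN hom gtr0_norm // => h.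
have -> : `|f z| = a^-1 * (a * `|f z|) by rewrite mulKf // gt_eqF.
have -> : 2 / e * `|z| = a^-1 * 1 by rewrite /a; field; rewrite !gt_eqF.
by rewrite ler_pM2l ?invr_gt0 // ltW.
Qed.

Theorem lemma4 (R : realType) (X : completeNormedModType (Cx R))
  (domA : set X) (A : X -> X -> Cx R) (E : X -> X) :
  reflexive_space X ->
  op_to_dual domA A -> positive_op domA A -> selfadjoint_op domA A ->
  bounded_op E ->
  (forall x, domA x -> domA (E x)) ->
  (forall x, domA x -> A (E x) = cadj_op E (A x)) ->
  exists Ehat : (X -> Cx R) -> (X -> Cx R),
    (forall x, domA x -> Ehat (A x) = A (E x)) /\
    (forall (a : Cx R) u v, ranA domA A u -> ranA domA A v ->
       Ehat (fun z => a * u z + v z) = (fun z => a * Ehat u z + Ehat v z)) /\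
    (exists c : R, 0 <= c /\
       forall x y, domA x -> domA y -> A y = Ehat (A x) ->
         A y y <= (c%:C)%C * A x x).
Proof.
move=> _ [dom0 [domL [Acd Alin]]] pos [_ [_ sym]] [Elin Econt] Edom Hcomm.
exists (fun u z => u (E z)); split.
  by move=> x dx; rewrite Hcomm.
split; first by [].
have E0 : E 0 = 0.
  have h := Elin 1 0 0; rewrite !scale1r addr0 in h.
  have : E 0 + E 0 - E 0 = E 0 - E 0 by rewrite -h.
  by rewrite addrK subrr.
have [K [K0 HK]] : exists K : R, 0 < K /\ forall z, `|E z| <= ((K%:C)%C : Cx R) * `|z|.
  apply: bound_hom => //; first exact: Econt.
  by move=> a z; have := Elin a z 0; rewrite addr0 E0 addr0 => ->; rewrite normrZ.
exists (K ^+ 2); split; first by rewrite exprn_ge0 // ltW.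
move=> x y dx dy Ay.
have v0 : A x 0 = 0.
  have [[ad _] _] := Acd x dx.
  have h := ad 0 0; rewrite addr0 in h.
  have : A x 0 + A x 0 - A x 0 = A x 0 - A x 0 by rewrite -h.
  by rewrite addrK subrr.
have [M [M0 HM]] : exists M : R, 0 < M /\ forall z, `|A x z| <= ((M%:C)%C : Cx R) * `|z|.
  apply: (@bound_hom R X (Cx R) (A x)) => //; first exact: (Acd x dx).2.
  move=> a z; have [[_ sc] _] := Acd x dx.
  by rewrite sc normrM norm_conjC.
have domI : forall k, domA (iter k E x).
  by elim=> [|k IH] //=; apply: Edom.
have AE : forall j u z, domA u -> A (iter j E u) z = A u (iter j E z).
  elim=> [|j IH] u z du //=.
  rewrite Hcomm; last by elim: j {IH} => [|j IHj] //=; apply: Edom.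
  by rewrite /cadj_op IH // -iterSr.
have Ereal : forall w, domA w -> ((complex.Re (A w w))%:C)%C = A w w.
  by move=> w dw; apply: RRe_real; apply: ger0_real; apply: pos.
have ItB : forall n z, `|iter n E z| <= ((K%:C)%C : Cx R) ^+ n * `|z|.
  elim=> [|n IH] z /=; first by rewrite expr0 mul1r.
  apply: le_trans (HK _) _; rewrite exprS -mulrA ler_pM2l ?IH //.
  by rewrite ltcR.
set a := fun k => complex.Re (A (iter k E x) (iter k E x)).
have aE : forall k, ((a k)%:C)%C = A (iter k E x) (iter k E x) by move=> k; apply: Ereal.
have cr : forall r : R, ((r%:C)%C : Cx R)^* = (r%:C)%C.
  by move=> r; apply: conj_Creal; apply/complex_realP; exists r.
have cn : forall r : R, (- ((r%:C)%C : Cx R))^* = - (r%:C)%C.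
  by move=> r; apply: conj_Creal; rewrite realN; apply/complex_realP; exists r.
have age0 : forall k, 0 <= a k.
  by move=> k; rewrite -ler0c; have := pos _ (domI k); rewrite -aE => h; exact: h.
have key : a 1%N <= K ^+ 2 * a 0%N.
  apply: (@core R a (K ^+ 2) (M * complex.Re `|x|)).
  - by rewrite exprn_gt0.
  - exact: age0.
  - move=> k.
    have du := domI k; have dw := domI k.+2.
    have s1 : A (iter k E x) (iter k.+2 E x) = ((a k.+1)%:C)%C.
      by rewrite aE /= Hcomm.
    have s2 : A (iter k.+2 E x) (iter k E x) = ((a k.+1)%:C)%C.
      by rewrite -(sym _ _ dw du) s1 cr.
    apply: discr; try exact: age0.
    move=> t.
    have dz := domL (- (t%:C)%C) _ _ dw du.
    have := pos _ dz; rewrite /= Alin //.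
    have [[adw scw] _] := Acd _ dw; have [[adu scu] _] := Acd _ du.
    rewrite adw scw adu scu s1 s2 -!aE cn.
    move=> h; rewrite -ler0c; apply: le_trans h _; rewrite le_eqVlt; apply/orP; left; apply/eqP.
    rewrite !(rmorphD, rmorphB, rmorphM, rmorphXn, rmorph_nat) /=.
    ring.
  - move=> k; rewrite -lecR.
    have rk : ((a k)%:C)%C \is @Num.real (Cx R) by apply/complex_realP; exists (a k).
    apply: le_trans (real_ler_norm rk) _.
    rewrite aE AE // -iterD.
    apply: le_trans (HM _) _.
    apply: le_trans (_ : _ <= ((M%:C)%C : Cx R) * (((K%:C)%C : Cx R) ^+ (k + k) * `|x|)) _.
      by rewrite ler_pM2l ?ItB // ltcR.
    have nx : ((complex.Re `|x|)%:C)%C = `|x| :> Cx R by apply: RRe_real; exact: normr_real.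
    rewrite -nx -rmorphXn -!rmorphM lecR addnn -mul2n exprM.
    by rewrite le_eqVlt; apply/orP; left; apply/eqP; ring.
have e1 : A y y = ((a 1%N)%:C)%C.
  have Ay' : A y = A (E x) by rewrite Ay Hcomm.
  rewrite {1}Ay' -(sym _ _ (Edom _ dx) dy) Ay' -[E x]/(iter 1 E x) -aE.
  exact: cr.
by rewrite e1 -(aE 0%N) /= -rmorphM lecR.
Qed.
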